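(* For the Markov Transition Model $M$, aggregation scheme $\Phi$, policies $\pi_e,\pi_b$ and offline distribution $\mu_h=d_h^{\pi_b}(\cdot;M)$ of the Example below (with $H\ge2$): (i) $\max_{\pi}\max_{h\in[H]}\max_{x\in\mathcal{X}_h,a\in\mathcal{A}}\frac{d_h^\pi(x,a;M)}{d_h^{\pi_b}(x,a;M)}\le 8H^3$, where the outer maximum ranges over all (non-stationary Markov) policies $\pi$; in particular the standard concentrability coefficient of $\pi_e$ is at most $8H^3$; (ii) for every $\epsilon\le 1/15$, the aggregated concentrability coefficient satisfies $\bar{\mathsf{C}}_\epsilon(M,\Phi,\mu)\ge 2^{H-7}$.
   Context: Example: $H\ge2$; for each $h\in[H]$, $\mathcal{X}_h=\{x_h^{(1)},x_h^{(2)},x_h^{(3)}\}$; $\mathcal{A}=\{a_1,a_2\}$; initial distribution $\rho(x_1^{(1)})=\frac{H-1}{2H}$, $\rho(x_1^{(2)})=\frac{1}{2H}$, $\rho(x_1^{(3)})=\frac12$. For $h\in[H-1]$: under $a_1$, $x_h^{(1)}\to x_{h+1}^{(2)}$, $x_h^{(2)}\to x_{h+1}^{(3)}$, $x_h^{(3)}\to x_{h+1}^{(3)}$ deterministically; under $a_2$, $x_h^{(1)}\to x_{h+1}^{(1)}$ or $x_{h+1}^{(3)}$ each w.p. $1/2$, $x_h^{(2)}\to x_{h+1}^{(2)}$ or $x_{h+1}^{(3)}$ each w.p. $1/2$, $x_h^{(3)}\to x_{h+1}^{(3)}$ w.p. 1. Evaluation policy $\pi_e(x)=a_1$ for all $x$;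 offline policy $\pi_b(a_1|x)=1/H^2$, $\pi_b(a_2|x)=(H^2-1)/H^2$ for all $x$; offline distribution $\mu_h=d_h^{\pi_b}(\cdot;M)$ for all $h\in[H]$. Aggregation: $\Phi_h=\{\phi_h^{(1)},\phi_h^{(2)}\}$ with $\phi_h^{(1)}=\{x_h^{(1)},x_h^{(2)}\}$, $\phi_h^{(2)}=\{x_h^{(3)}\}$. Occupancy: $d_h^\pi(x;M)=\Pr(x_h=x)$ under $x_1\sim\rho$, $a_h\sim\pi(\cdot|x_h)$, $x_{h+1}\sim T(\cdot|x_h,a_h)$; $d_h^\pi(x,a)=d_h^\pi(x)\pi(a|x)$. Aggregated transitions, for $\phi\in\Phi_h,\phi'\in\Phi_{h+1}$: $\bar T(\phi'|\phi,\pi)=\frac{\sum_{x\in\phi}\sum_{x'\in\phi'}\sum_a\pi(a|x)\mu_h(x,a)T(x'|x,a)}{\sum_{x\in\phi}\sum_a\pi(a|x)\mu_h(x,a)}$. Aggregated occupancy $\bar d_h^\pi(\phi)$: law of $\phi_h$ under $\phi_1\sim\bar\rho$, $\phi_{i+1}\sim\bar T(\cdot|\phi_i,\pi)$, $\bar\rho(\phi)=\sum_{x\in\phi}\rho(x)$. Aggregated concentrability: $\bar{\mathsf{C}}_\epsilon(M,\Phi,\mu)=\max_h\max\{\frac{\sum_{\phi\in\mathcal{I}}\bar d_h^{\pi_e}(\phi)}{\sum_{\phi\in\mathcal{I}}\sum_{x\in\phi}\mu_h(x,\pi_e(x))}:\mathcal{I}\subseteq\Phi_h,\ \sum_{\phi\in\mathcal{I}}\bar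 d_h^{\pi_e}(\phi)\ge\epsilon\}$. *)

(* Defs.v *)
From mathcomp Require Import all_boot all_order all_algebra.
Set Implicit Arguments. Unset Strict Implicit.
Import Order.TTheory GRing.Theory Num.Theory.
Local Open Scope ring_scope.

(* Layers are 0-indexed: layer h (0 <= h < H) is layer h+1 of the paper.
   State x_h^{(i)} is represented by the ordinal i-1 : 'I_3 (same set at every
   layer); action a_1 is ord 0, a_2 is ord 1 in 'I_2. *)
Notation St := 'I_3.
Notation Act := 'I_2.

Section Example.
Variable R : realFieldType.
Variable H : nat.

Definition rho (x : St) : R :=
  if val x == 0%N then (H%:R - 1) / (2 * H%:R)
  else if val x == 1%N then 1 / (2 * H%:R)
  else 1 / 2.

(* transition kernel T(x'|x,a) (the same at each layer h in [H-1]) *)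
Definition T (x : St) (a : Act) (x' : St) : R :=
  if val a == 0%N then
    (if [|| (val x == 0%N) && (val x' == 1%N),
           (val x == 1%N) && (val x' == 2%N)
         | (val x == 2%N) && (val x' == 2%N)] then 1 else 0)
  else
    (if val x == 2%N then (if val x' == 2%N then 1 else 0)
     else if (x' == x) || (val x' == 2%N) then 1 / 2 else 0).

(* non-stationary Markov policy: pi h x a = pi_h(a | x) *)
Definition policy (pi : nat -> St -> Act -> R) : Prop :=
  (forall h x a, 0 <= pi h x a) /\ (forall h x, \sum_(a : Act) pi h x a = 1).

Fixpoint occ (pi : nat -> St -> Act -> R) (h : nat) (x : St) : R :=
  match h with
  | 0 => rho x
  | h'.+1 => \sum_(y : St) \sum_(a : Act) occ pi h' y * pi h' y a * T y a x
  end.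

Definition pie (h : nat) (x : St) (a : Act) : R := if val a == 0%N then 1 else 0.
Definition pib (h : nat) (x : St) (a : Act) : R :=
  if val a == 0%N then 1 / (H%:R ^+ 2) else (H%:R ^+ 2 - 1) / (H%:R ^+ 2).

Definition mu (h : nat) (x : St) (a : Act) : R := occ pib h x * pib h x a.

(* aggregation: phi^(1) = {x^(1), x^(2)} is ord 0, phi^(2) = {x^(3)} is ord 1 *)
Definition inphi (phi : 'I_2) (x : St) : bool :=
  if val phi == 0%N then val x != 2%N else val x == 2%N.

Definition Tbar (pi : nat -> St -> Act -> R) (h : nat) (phi phi' : 'I_2) : R :=
  (\sum_(x | inphi phi x) \sum_(x' | inphi phi' x') \sum_(a : Act)
      pi h x a * mu h x a * T x a x')
  / (\sum_(x | inphi phi x) \sum_(a : Act) pi h x a * mu h x a).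

Fixpoint dbar (pi : nat -> St -> Act -> R) (h : nat) (phi : 'I_2) : R :=
  match h with
  | 0 => \sum_(x | inphi phi x) rho x
  | h'.+1 => \sum_(psi : 'I_2) dbar pi h' psi * Tbar pi h' psi phi
  end.

Definition pie_act (x : St) : Act := ord0.

Definition Cbar (eps : R) : R :=
  \big[Num.max/0]_(h < H)
    \big[Num.max/0]_(I : {set 'I_2} | eps <= \sum_(phi in I) dbar pie h phi)
      ((\sum_(phi in I) dbar pie h phi)
       / (\sum_(phi in I) \sum_(x | inphi phi x) mu h x (pie_act x))).

End Example.

Arguments rho {R}.
Arguments T {R}.
Arguments occ {R}.
Arguments pie {R}.
Arguments pib {R}.
Arguments mu {R}.
Arguments Tbar {R}.
Arguments dbar {R}.
Arguments Cbar {R}.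
Arguments policy {R}.

(* Main.v *)
Require Import Defs.
From Stdlib Require Reals Lra Lia ZArith.
Module StdPart.
Import Reals Lra Lia ZArith.
Open Scope R_scope.
Fixpoint prR (f : nat -> R) (m : nat) : R :=
  match m with O => 1 | S m => prR f m * f m end.
Fixpoint smR (f : nat -> R) (m : nat) : R :=
  match m with O => 0 | S m => smR f m + f m end.
Fixpoint prN (f : nat -> nat) (m : nat) : nat :=
  match m with O => 1%nat | S m => (prN f m * f m)%nat end.

Lemma prR_bound (b : R) (c : nat -> R) : 0 < b -> (forall k, 0 <= c k) ->
  forall m, prR (fun k => b + c k) m <= b ^ m * exp (smR c m / b).
Proof.
  intros Hb Hc. induction m as [|m IH]; simpl.
  - unfold Rdiv. rewrite Rmult_0_l, exp_0. lra.
  - assert (E : (smR c m + c m) / b = smR c m / b + c m / b) by (field; lra).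
    rewrite E, exp_plus.
    assert (Hp : 0 <= prR (fun k => b + c k) m).
    { clear IH. induction m; simpl; [lra|]. pose proof (Hc m). nra. }
    assert (Hbc : b + c m <= b * exp (c m / b)).
    { pose proof (exp_ineq1_le (c m / b)).
      assert (b + c m = b * (1 + c m / b)) by (field; lra). rewrite H0.
      apply Rmult_le_compat_l; lra. }
    pose proof (Hc m).
    apply Rle_trans with (b ^ m * exp (smR c m / b) * (b + c m)).
    + apply Rmult_le_compat_r; lra.
    + pose proof (exp_pos (smR c m / b)). pose proof (pow_lt b m Hb).
      replace (b * b ^ m * (exp (smR c m / b) * exp (c m / b))) with
        (b ^ m * exp (smR c m / b) * (b * exp (c m / b))) by ring.
      apply Rmult_le_compat_l; [|lra]. apply Rmult_le_pos; lra.
Qed.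

Lemma exp_mul (x : R) (m : nat) : exp (INR m * x) = exp x ^ m.
Proof.
  induction m as [|m IH].
  - simpl. rewrite Rmult_0_l, exp_0. reflexivity.
  - rewrite S_INR, Rmult_plus_distr_r, Rmult_1_l, exp_plus, IH. simpl pow. ring.
Qed.
Lemma exp2_bound : exp 2 <= 15 / 2.
Proof.
  replace (exp 2) with (exp (1/100) ^ 200).
  2:{ rewrite <- exp_mul. f_equal. rewrite INR_IZR_INZ; simpl; field. }
  assert (H1 : exp (1/100) <= 100/99).
  { pose proof (exp_ineq1_le (- (1/100))) as Ha.
    assert (Hb : exp (1/100) * exp (-(1/100)) = 1).
    { rewrite <- exp_plus. replace (1/100 + - (1/100)) with 0 by ring. apply exp_0. }
    pose proof (exp_pos (1/100)) as Hc.
    set (u := exp (1/100)) in *. set (v := exp (-(1/100))) in *.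
    assert (0 <= u * (v - 99/100)) by (apply Rmult_le_pos; lra).
    lra. }
  apply Rle_trans with ((100/99) ^ 200).
  { apply pow_incr. split; [left; apply exp_pos | exact H1]. }
  unfold Rdiv. rewrite Rpow_mult_distr, pow_inv.
  assert (Hq : IZR 100 ^ 200 * 2 <= 15 * IZR 99 ^ 200).
  { rewrite !pow_IZR. rewrite <- !mult_IZR. apply IZR_le. vm_compute. discriminate. }
  assert (Hpos : 0 < 99 ^ 200) by (apply pow_lt; lra).
  apply Rmult_le_reg_r with (99 ^ 200 * 2). nra.
  replace (100 ^ 200 * / 99 ^ 200 * (99 ^ 200 * 2)) with (100 ^ 200 * 2) by (field; lra).
  replace (15 * / 2 * (99 ^ 200 * 2)) with (15 * 99^200) by field.
  exact Hq.
Qed.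

Lemma smR_lin (a : R) (m : nat) :
  smR (fun k => a + 2 * INR k) m = INR m * a + INR m * INR m - INR m.
Proof.
  induction m as [|m IH]; [simpl; ring|].
  cbn [smR]. rewrite IH, S_INR. ring.
Qed.

Lemma prN_INR f m : INR (prN f m) = prR (fun k => INR (f k)) m.
Proof. induction m as [|m IH]; simpl; [reflexivity|]. rewrite mult_INR, IH; reflexivity. Qed.


Lemma prR_const (b : R) m : prR (fun _ => b) m = b ^ m.
Proof. induction m as [|m IH]; simpl; [reflexivity|]. rewrite IH; ring. Qed.
Lemma prR_ext f g m : (forall k, f k = g k) -> prR f m = prR g m.
Proof. intros E; induction m; simpl; [reflexivity|]. rewrite IHm, E; reflexivity. Qed.
Lemma smR_ext f g m : (forall k, f k = g k) -> smR f m = smR g m.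
Proof. intros E; induction m; simpl; [reflexivity|]. rewrite IHm, E; reflexivity. Qed.

Lemma key_nat (n : nat) : (1 <= n)%nat ->
  (2 * prN (fun k => n * (n + 2) + ((n + 2) + 2 * k)) n <= 15 * prN (fun _ => n * (n + 2)) n)%nat.
Proof.
  intros Hn. apply INR_le. rewrite !mult_INR, !prN_INR, prR_const.
  set (b := INR (n * (n + 2))).
  assert (Hb : 0 < b). { unfold b. apply lt_0_INR. nia. }
  rewrite (prR_ext _ (fun k => b + (INR (n+2) + 2 * INR k))).
  2:{ intros k. unfold b. rewrite (plus_INR (n*(n+2))), (plus_INR (n+2)), (mult_INR 2). reflexivity. }
  pose proof (prR_bound b (fun k => INR (n+2) + 2 * INR k) Hb) as PB.
  assert (Hc : forall k, 0 <= INR (n+2) + 2 * INR k).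
  { intros k. pose proof (pos_INR (n+2)). pose proof (pos_INR k). lra. }
  specialize (PB Hc n).
  rewrite smR_lin in PB.
  assert (Hs : (INR n * INR (n + 2) + INR n * INR n - INR n) / b <= 2).
  { unfold b. rewrite mult_INR, plus_INR. simpl (INR 2).
    pose proof (pos_INR n) as P0. assert (1 <= INR n) by (apply (le_INR 1 n); lia).
    apply Rmult_le_reg_r with (INR n * (INR n + 2)). nra.
    field_simplify; [nra|nra]. }
  assert (He : exp ((INR n * INR (n + 2) + INR n * INR n - INR n) / b) <= exp 2).
  { destruct Hs as [Hs|Hs]; [left; apply exp_increasing; exact Hs | rewrite Hs; lra]. }
  pose proof exp2_bound. pose proof (pow_lt b n Hb).
  apply Rle_trans with (2 * (b ^ n * exp 2)).
  - apply Rmult_le_compat_l; [lra|]. apply Rle_trans with (1 := PB).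
    apply Rmult_le_compat_l; lra.
  - assert (b^n * exp 2 <= b^n * (15/2)) by (apply Rmult_le_compat_l; lra). replace (INR 15) with 15 by (rewrite INR_IZR_INZ; reflexivity). lra.
Qed.
End StdPart.

From mathcomp Require Import all_boot all_order all_algebra.
From mathcomp Require Import ring lra zify.
Import Order.TTheory GRing.Theory Num.Theory.
Local Open Scope ring_scope.
Set Implicit Arguments. Unset Strict Implicit.

Lemma prN_big f m : StdPart.prN f m = \prod_(k < m) f k.
Proof. elim: m => [|m IH]; first by rewrite big_ord0. by rewrite big_ord_recr /= -IH multE. Qed.

Section Part.
Variable R : realFieldType.
Variable H : nat.
Hypothesis hH : (2 <= H)%N.

Definition s0 : 'I_3 := @Ordinal 3 0 isT.
Definition s1 : 'I_3 := @Ordinal 3 1 isT.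
Definition s2 : 'I_3 := @Ordinal 3 2 isT.
Definition a0 : 'I_2 := @Ordinal 2 0 isT.
Definition a1 : 'I_2 := @Ordinal 2 1 isT.

Lemma sum3 (F : 'I_3 -> R) : \sum_x F x = F s0 + F s1 + F s2.
Proof.
  rewrite !big_ord_recr big_ord0 /=. rewrite add0r.
  congr (F _ + F _ + F _); exact: val_inj.
Qed.
Lemma sum2 (F : 'I_2 -> R) : \sum_x F x = F a0 + F a1.
Proof.
  rewrite !big_ord_recr big_ord0 /=. rewrite add0r.
  congr (F _ + F _); exact: val_inj.
Qed.
Lemma ord3P (x : 'I_3) : [\/ x = s0, x = s1 | x = s2].
Proof.
  case: x => [[|[|[|m]]] Hm].
  - by apply: Or31; apply: val_inj.
  - by apply: Or32; apply: val_inj.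
  - by apply: Or33; apply: val_inj.
  - by [].
Qed.
Lemma ord2P (x : 'I_2) : x = a0 \/ x = a1.
Proof.
  case: x => [[|[|m]] Hm].
  - by left; apply: val_inj.
  - by right; apply: val_inj.
  - by [].
Qed.

Section Occ.
Variable pi : nat -> 'I_3 -> 'I_2 -> R.
Lemma occS0 h : occ H pi h.+1 s0 = occ H pi h s0 * pi h s0 a1 / 2.
Proof. rewrite /= sum3 !sum2 /T /=. by field. Qed.
Lemma occS1 h : occ H pi h.+1 s1 =
  occ H pi h s0 * pi h s0 a0 + occ H pi h s1 * pi h s1 a1 / 2.
Proof. rewrite /= sum3 !sum2 /T /=. by field. Qed.
Lemma occS2 h : occ H pi h.+1 s2 =
  occ H pi h s0 * pi h s0 a1 / 2 + occ H pi h s1 * (pi h s1 a0 + pi h s1 a1 / 2)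
  + occ H pi h s2 * (pi h s2 a0 + pi h s2 a1).
Proof. rewrite /= sum3 !sum2 /T /=. by field. Qed.

Hypothesis Hpi : policy pi.
Lemma pi_ge0 h x a : 0 <= pi h x a.
Proof. by case: Hpi. Qed.
Lemma pi_a0 h x : pi h x a0 = 1 - pi h x a1.
Proof. case: Hpi => _ /(_ h x). rewrite sum2 => <-. by rewrite addrK. Qed.
Lemma pi_le1 h x a : pi h x a <= 1.
Proof.
  case: (ord2P a) => ->.
  - rewrite pi_a0 lerBlDr lerDl. exact: pi_ge0.
  - have := pi_ge0 h x a0. rewrite pi_a0. lra.
Qed.

Lemma Hr2 : 2 <= H%:R :> R.
Proof. have := hH. rewrite -(ler_nat R). done. Qed.

Lemma rho0 : rho (R:=R) H s0 = (H%:R - 1) / (2 * H%:R).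
Proof. by []. Qed.
Lemma rho1 : rho (R:=R) H s1 = 1 / (2 * H%:R).
Proof. by []. Qed.
Lemma rho2 : rho (R:=R) H s2 = 1 / 2.
Proof. by []. Qed.

Lemma occ_ge0 h x : 0 <= occ H pi h x.
Proof.
  elim: h x => [|h IH] x.
  - have H2 := Hr2. case: (ord3P x) => ->; rewrite /= ?rho0 ?rho1 ?rho2.
    + apply: divr_ge0; lra.
    + apply: divr_ge0; lra.
    + lra.
  - have P := pi_ge0 h. case: (ord3P x) => ->.
    + rewrite occS0; apply: divr_ge0 => //. by apply: mulr_ge0.
    + rewrite occS1; apply: addr_ge0; first by apply: mulr_ge0.
      apply: divr_ge0 => //. by apply: mulr_ge0.
    + rewrite occS2; apply: addr_ge0; first apply: addr_ge0.
      * apply: divr_ge0 => //. by apply: mulr_ge0.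
      * apply: mulr_ge0 => //; apply: addr_ge0 => //. by apply: divr_ge0.
      * by apply: mulr_ge0 => //; apply: addr_ge0.
Qed.

Lemma occ_sum h : occ H pi h s0 + occ H pi h s1 + occ H pi h s2 = 1.
Proof.
  elim: h => [|h IH].
  - have H2 := Hr2. rewrite /= rho0 rho1 rho2. field. lra.
  - rewrite occS0 occS1 occS2 !pi_a0. rewrite -[X in _ = X]IH. by field.
Qed.

Lemma occ_le1 h x : occ H pi h x <= 1.
Proof.
  have := occ_sum h. have := occ_ge0 h s0. have := occ_ge0 h s1. have := occ_ge0 h s2.
  case: (ord3P x) => ->; lra.
Qed.

Lemma occ_V h : 2 ^+ h * (occ H pi h s1 + 2 * occ H pi h s0) <= 1.
Proof.
  elim: h => [|h IH].
  - have H2 := Hr2. rewrite /= rho0 rho1 expr0 mul1r.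
    rewrite -subr_ge0. 
    have -> : 1 - (1 / (2 * H%:R) + 2 * ((H%:R - 1) / (2 * H%:R))) = 1 / (2 * H%:R) :> R.
      field. lra.
    apply: divr_ge0; lra.
  - rewrite occS0 occS1 pi_a0.
    have E : occ H pi h s0 * (1 - pi h s0 a1) + occ H pi h s1 * pi h s1 a1 / 2 +
      2 * (occ H pi h s0 * pi h s0 a1 / 2) =
      (occ H pi h s1 + 2 * occ H pi h s0) / 2 - occ H pi h s1 * pi h s1 a0 / 2.
      rewrite pi_a0. by field.
    rewrite E exprS.
    have P : 0 <= occ H pi h s1 * pi h s1 a0 / 2.
      apply: divr_ge0 => //. apply: mulr_ge0; [exact: occ_ge0 | exact: pi_ge0].
    have P2 : 0 <= 2 ^+ h :> R by apply: exprn_ge0.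
    set A := occ H pi h s1 + 2 * occ H pi h s0 in IH *.
    set B := occ H pi h s1 * pi h s1 a0 / 2 in P *.
    set C := 2 ^+ h in IH P2 *.
    have : 0 <= C * B by apply: mulr_ge0.
    have -> : 2 * C * (A / 2 - B) = C * A - 2 * (C * B) by field.
    lra.
Qed.

Lemma occ2_ge h : 1 / 2 <= occ H pi h s2.
Proof.
  elim: h => [|h IH]; first by rewrite /= rho2.
  rewrite occS2 (pi_a0 h s2) (_ : 1 - pi h s2 a1 + pi h s2 a1 = 1); last by ring.
  rewrite mulr1. apply: (le_trans IH). rewrite lerDr. apply: addr_ge0.
  - apply: divr_ge0 => //. apply: mulr_ge0; [exact: occ_ge0 | exact: pi_ge0].
  - apply: mulr_ge0; first exact: occ_ge0. apply: addr_ge0; first exact: pi_ge0.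
    apply: divr_ge0 => //; exact: pi_ge0.
Qed.
End Occ.

Notation Hr := (H%:R : R).
Definition p : R := 1 / Hr ^+ 2.
Definition q : R := (Hr ^+ 2 - 1) / Hr ^+ 2.
Definition c0 : R := (Hr - 1) / (2 * Hr).

Lemma Hr_gt0 : 0 < Hr.
Proof. have := Hr2. lra. Qed.
Lemma Hr_neq0 : Hr != 0.
Proof. by rewrite gt_eqF // Hr_gt0. Qed.
Lemma HrS_neq0 : Hr + 1 != 0.
Proof. have : 0 < Hr + 1 by have := Hr2; lra. by move=> h; rewrite gt_eqF. Qed.
Lemma Hr2_gt : 4 <= Hr ^+ 2.
Proof. have h2 := Hr2. have m : 0 <= (Hr - 2) * (Hr + 2) by apply: mulr_ge0; lra. have E : Hr ^+ 2 - 4 = (Hr - 2) * (Hr + 2) by ring. lra. Qed.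

Lemma pib_a0 h x : pib H h x a0 = p. Proof. by []. Qed.
Lemma pib_a1 h x : pib H h x a1 = q. Proof. by []. Qed.
Lemma p_gt0 : 0 < p.
Proof. rewrite /p. apply: divr_gt0 => //. have := Hr2_gt. lra. Qed.
Lemma q_ge34 : 3 / 4 <= q.
Proof.
  rewrite /q. have := Hr2_gt. move=> h4.
  rewrite ler_pdivlMr; last lra. rewrite -subr_ge0.
  have -> : Hr ^+ 2 - 1 - 3 / 4 * Hr ^+ 2 = (Hr ^+2 - 4) / 4 by field.
  apply: divr_ge0; lra.
Qed.
Lemma q_le1 : q <= 1.
Proof.
  rewrite /q. have := Hr2_gt => h4. rewrite ler_pdivrMr; lra.
Qed.
Lemma p_le_q : p <= q.
Proof.
  rewrite /p /q. have := Hr2_gt => h4. rewrite ler_pM2r. lra. rewrite invr_gt0. lra.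
Qed.
Lemma pq : p + q = 1.
Proof. rewrite /p /q. field. by rewrite Hr_neq0. Qed.

Lemma pib_policy : policy (pib (R:=R) H).
Proof.
  split.
  - move=> h x a. have := p_gt0. have := q_ge34. case: (ord2P a) => ->;
    rewrite ?pib_a0 ?pib_a1; lra.
  - move=> h x. by rewrite sum2 pib_a0 pib_a1 pq.
Qed.

Lemma pib_ge_p h x a : p <= pib H h x a.
Proof. case: (ord2P a) => ->; rewrite ?pib_a0 ?pib_a1 //. exact: p_le_q. Qed.

Lemma d0_pib h : occ H (pib H) h s0 = c0 * (q / 2) ^+ h.
Proof.
  elim: h => [|h IH]; first by rewrite /= rho0 expr0 mulr1.
  rewrite occS0 IH pib_a1 exprS. by field.
Qed.

Lemma d1_pib h : occ H (pib H) h s1 =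
  (q / 2) ^+ h * (1 / (2 * Hr) + h%:R / (Hr * (Hr + 1))).
Proof.
  elim: h => [|h IH]; first by rewrite /= rho1 expr0 mul0r addr0 !mul1r.
  rewrite occS1 IH d0_pib pib_a0 pib_a1 exprS.
  set X := (q / 2) ^+ h. rewrite /c0 /p /q -natr1.
  have := Hr_neq0. have := HrS_neq0. move=> h1 h2.
  field. by rewrite h1 h2.
Qed.

Lemma bern (x : R) n : 0 <= x <= 1 -> 1 - n%:R * x <= (1 - x) ^+ n.
Proof.
  move=> /andP [x0 x1]. elim: n => [|n IH]; first by rewrite mul0r subr0 expr0.
  rewrite exprS -natr1.
  have h : (1 - n%:R * x) * (1 - x) <= (1 - x) * (1 - x) ^+ n.
    rewrite mulrC. apply: ler_wpM2l; lra.
  apply: le_trans h. have : 0 <= n%:R * x * x by apply: mulr_ge0 => //; apply: mulr_ge0.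
  lra.
Qed.

Lemma qpow h : (h < H)%N -> 3 / 4 <= q ^+ h.
Proof.
  move=> hh. have : q = 1 - p by rewrite -pq; ring.
  move=> ->. have := p_gt0 => p0. have pl : p <= 1 by have := p_le_q; have := q_le1; lra.
  have b : 1 - h%:R * p <= (1 - p) ^+ h by apply: bern; apply/andP; split; lra.
  apply: le_trans b.
  have hn : h%:R <= Hr - 1.
    have : (h.+1 <= H)%N := hh. rewrite -(ler_nat R) -natr1. lra.
  have : h%:R * p <= (Hr - 1) * p by apply: ler_wpM2r => //; lra.
  have : (Hr - 1) * p <= 1 / 4.
    rewrite /p. have := Hr2 => h2. have h4 := Hr2_gt.
    rewrite mulrA mulr1 ler_pdivrMr; last lra.
    rewrite expr2. nra.
  lra.
Qed.

Lemma cmp_scaled (T a b : R) : 0 < T -> T * a <= 1 -> 1 <= T * b -> a <= b.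
Proof. move=> T0 h1 h2. rewrite -(ler_pM2l T0). lra. Qed.

Lemma qh_div h : 2 ^+ h * (q / 2) ^+ h = q ^+ h.
Proof. rewrite expr_div_n. field. by rewrite expf_neq0 // pnatr_eq0. Qed.

Lemma part1 pi (Hpi : policy pi) h (hh : (h < H)%N) x a :
  occ H pi h x * pi h x a / (occ H (pib H) h x * pib H h x a) <= 8 * Hr ^+ 3.
Proof.
  have Hb := pib_policy.
  have h2 := Hr2. have p0 := p_gt0. have q34 := qpow hh.
  have T0 : 0 < 2 ^+ h :> R by apply: exprn_gt0.
  have Xpos : 0 < (q / 2) ^+ h.
    apply: exprn_gt0. apply: divr_gt0 => //. have := q_ge34. lra.
  have c0pos : 0 < c0. rewrite /c0. apply: divr_gt0; lra.
  have Dpos : (0 : R) < occ H (pib H) h x.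
    case: (ord3P x) => ->.
    - rewrite d0_pib. exact: mulr_gt0.
    - rewrite d1_pib. apply: mulr_gt0 => //.
      have : 0 < 1 / (2 * Hr) by apply: divr_gt0; lra.
      have : 0 <= h%:R / (Hr * (Hr + 1)) by apply: divr_ge0 => //; apply: mulr_ge0; lra.
      lra.
    - have := occ2_ge Hb h. lra.
  have pa := pib_ge_p h x a.
  rewrite ler_pdivrMr; last by apply: mulr_gt0 => //; lra.
  apply: (@le_trans _ _ (occ H pi h x)).
    rewrite -[X in _ <= X]mulr1. apply: ler_wpM2l; [exact: occ_ge0 | exact: pi_le1].
  apply: (@le_trans _ _ (8 * Hr ^+ 3 * (occ H (pib H) h x * p))); last first.
    apply: ler_wpM2l; first by apply: mulr_ge0 => //; apply: exprn_ge0; lra.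
    apply: ler_wpM2l => //; lra.
  have -> : 8 * Hr ^+ 3 * (occ H (pib H) h x * p) = 8 * Hr * occ H (pib H) h x.
    rewrite /p. field. by rewrite ?Hr_neq0 ?expf_neq0 ?pnatr_eq0 ?Hr_neq0.
  have V := occ_V Hpi h. have g0 := occ_ge0 Hpi h. have hq := q_ge34.
  case: (ord3P x) => ->.
  -     apply: (@cmp_scaled (2 ^+ h)) => //.
    + have := g0 s1. have : 0 <= 2 ^+ h * occ H pi h s1 by apply: mulr_ge0; [lra|exact: g0].
      have E : 2 ^+ h * (occ H pi h s1 + 2 * occ H pi h s0) = 2 ^+ h * occ H pi h s1 + 2 * (2 ^+ h * occ H pi h s0) by ring.
      lra.
    + rewrite d0_pib (_ : 2 ^+ h * (8 * Hr * (c0 * (q / 2) ^+ h)) = 8 * Hr * c0 * (2 ^+ h * (q / 2) ^+ h)); last by ring.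
      rewrite qh_div (_ : 8 * Hr * c0 = 4 * (Hr - 1)); last by rewrite /c0; field; rewrite Hr_neq0.
      have : q ^+ h <= (Hr - 1) * q ^+ h.
        rewrite -[X in X <= _]mul1r. apply: ler_wpM2r; lra.
      lra.
  -     apply: (@cmp_scaled (2 ^+ h)) => //.
    + have : 0 <= 2 ^+ h * occ H pi h s0 by apply: mulr_ge0; [lra|exact: g0].
      have E : 2 ^+ h * (occ H pi h s1 + 2 * occ H pi h s0) = 2 ^+ h * occ H pi h s1 + 2 * (2 ^+ h * occ H pi h s0) by ring.
      lra.
    + rewrite d1_pib.
      set Y := h%:R / (Hr * (Hr + 1)).
      have Y0 : 0 <= Y by apply: divr_ge0 => //; apply: mulr_ge0; lra.
      rewrite (_ : 2 ^+ h * (8 * Hr * ((q / 2) ^+ h * (1 / (2 * Hr) + Y))) = (2 ^+ h * (q / 2) ^+ h) * (4 + 8 * Hr * Y)); last first.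
        field. by rewrite Hr_neq0.
      rewrite qh_div.
      have : 0 <= q ^+ h * (8 * Hr * Y) by apply: mulr_ge0; [lra | apply: mulr_ge0 => //; lra].
      have -> : q ^+ h * (4 + 8 * Hr * Y) = 4 * q ^+ h + q ^+ h * (8 * Hr * Y) by ring.
      lra.
  -     have := occ_le1 Hpi h s2. have := occ2_ge Hb h. move=> d2 o2.
    have : 2 * occ H (pib H) h s2 <= Hr * occ H (pib H) h s2.
      apply: ler_wpM2r; lra.
    lra.
Qed.

Lemma dbar0 : dbar H (pie (R:=R)) 0 a0 = 1 / 2.
Proof.
  rewrite /= big_mkcond sum3 /= rho0 rho1. have := Hr_neq0 => hn. by field.
Qed.

Lemma sum3c (P : pred 'I_3) (F : 'I_3 -> R) : \sum_(x | P x) F x =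
  (if P s0 then F s0 else 0) + (if P s1 then F s1 else 0) + (if P s2 then F s2 else 0).
Proof. by rewrite big_mkcond sum3. Qed.

Lemma Tbar10 h : Tbar H (pie (R:=R)) h a1 a0 = 0.
Proof.
  rewrite /Tbar !sum3c !sum2 /= /T /pie /=.
  by rewrite !(mulr0, mul0r, addr0, add0r).
Qed.
Lemma Tbar00 h : Tbar H (pie (R:=R)) h a0 a0 =
  occ H (pib H) h s0 / (occ H (pib H) h s0 + occ H (pib H) h s1).
Proof.
  rewrite /Tbar !sum3c !sum2 /= /T /pie /= /mu !pib_a0.
  rewrite !(mulr0, mul0r, addr0, add0r, mul1r, mulr1).
  have d0p : 0 < occ H (pib (R:=R) H) h s0.
    rewrite d0_pib. apply: mulr_gt0.
    - rewrite /c0. have := Hr2 => ?. apply: divr_gt0; lra.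
    - apply: exprn_gt0. apply: divr_gt0 => //. have := q_ge34. lra.
  have d1p := occ_ge0 pib_policy h s1.
  have pn : p != 0 by rewrite gt_eqF // p_gt0.
  have sn : occ H (pib (R:=R) H) h s0 + occ H (pib H) h s1 != 0 by rewrite gt_eqF //; lra.
  rewrite -mulrDl. field. by rewrite pn sn.
Qed.

Lemma dbarS h : dbar H (pie (R:=R)) h.+1 a0 = dbar H pie h a0 *
  (occ H (pib H) h s0 / (occ H (pib H) h s0 + occ H (pib H) h s1)).
Proof.
  rewrite [LHS]/= sum2 Tbar00 Tbar10 mulr0 addr0. done.
Qed.

Definition rk (k : nat) : R := (Hr ^+ 2 - 1) / (Hr ^+ 2 + Hr + 2 * k%:R).

Lemma ratio_eq k : occ H (pib (R:=R) H) k s0 / (occ H (pib H) k s0 + occ H (pib H) k s1) = rk k.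
Proof.
  rewrite d0_pib d1_pib /rk /c0.
  have X0 : (q / 2) ^+ k != 0.
    rewrite gt_eqF //. apply: exprn_gt0. apply: divr_gt0 => //. have := q_ge34. lra.
  set X := (q / 2) ^+ k in X0 *.
  have h2 := Hr2.
  have k0 : 0 <= k%:R :> R by [].
  have n1 : Hr ^+ 2 + Hr + 2 * k%:R != 0.
    rewrite gt_eqF //. have := Hr2_gt. lra.
  have n2 : Hr - 1 != 0 by rewrite gt_eqF //; lra.
  have n3 : Hr ^+ 2 + Hr + 2 * k%:R = (Hr + 1) * Hr + 2 * k%:R by ring.
  have n4 : (Hr - 1) * X * (Hr + 1) + X * (Hr + 1 + k%:R * 2) = X * (Hr ^+ 2 + Hr + 2 * k%:R) by ring.
  field. by rewrite n1 HrS_neq0 Hr_neq0 n4 mulf_eq0 negb_or X0 n1.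
Qed.

Lemma dbar_prod h : dbar H (pie (R:=R)) h a0 = 1 / 2 * \prod_(k < h) rk k.
Proof.
  elim: h => [|h IH]; first by rewrite big_ord0 mulr1 dbar0.
  by rewrite dbarS IH ratio_eq big_ord_recr [RHS]mulrA.
Qed.

Lemma den_eq h : \sum_(phi in [set a0]) \sum_(x | inphi phi x) mu H h x (pie_act x) =
  p * (occ H (pib (R:=R) H) h s0 + occ H (pib H) h s1).
Proof.
  rewrite big_set1 sum3c /= /mu /pib /p /=. ring.
Qed.

Lemma prod_bound n : H = n.+1 -> 1 / 15 <= 1 / 2 * \prod_(k < n) rk k.
Proof.
  move=> Hn. have n1 : (1 <= n)%N by rewrite -ltnS -Hn.
  have n1' : (1 <= n)%coq_nat by apply/ssrnat.leP.
  have key := StdPart.key_nat n n1'. move/ssrnat.leP: key => key.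
  rewrite !multE !plusE !prN_big in key.
  have rkE k : rk k = (n * (n + 2))%:R / (n * (n + 2) + (n + 2 + 2 * k))%:R.
    rewrite /rk Hn -addn1 !natrD !natrM. congr (_ / _); ring.
  rewrite (eq_bigr (fun k : 'I_n => (n * (n + 2))%:R / (n * (n + 2) + (n + 2 + 2 * k))%:R) (fun k _ => rkE k)) prodf_div -!natr_prod.
  set X := \prod_(k < n) (n * (n + 2))%N.
  set Y := \prod_(k < n) (n * (n + 2) + (n + 2 + 2 * k))%N.
  have Y0 : (0 < Y)%N by apply: prodn_gt0 => k; lia.
  have := key. rewrite -(ler_nat R) !natrM => key'.
  rewrite mulrA ler_pdivlMr; last by rewrite ltr0n.
  lra.
Qed.

Lemma den_bound n : H = n.+1 ->
  2 ^+ n * (p * (occ H (pib (R:=R) H) n s0 + occ H (pib H) n s1)) <= 1 / 4.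
Proof.
  move=> Hn. rewrite d0_pib d1_pib.
  set X := (q / 2) ^+ n. set Y := n%:R / (Hr * (Hr + 1)).
  have E : 2 ^+ n * (p * (c0 * X + X * (1 / (2 * Hr) + Y))) =
    p * (2 ^+ n * X) * (c0 + 1 / (2 * Hr) + Y) by ring.
  rewrite E qh_div.
  have h2 := Hr2.
  have c : c0 + 1 / (2 * Hr) = 1 / 2 by rewrite /c0; field; rewrite Hr_neq0.
  have nr : n%:R = Hr - 1 by rewrite Hn -natr1 addrK.
  have Y0 : 0 <= Y by apply: divr_ge0 => //; apply: mulr_ge0; lra.
  have Yb : Y <= 1 / 2.
    rewrite /Y ler_pdivrMr; last by apply: mulr_gt0; lra.
    have : 2 * (Hr + 1) <= Hr * (Hr + 1) by apply: ler_wpM2r; lra.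
    rewrite nr. lra.
  have qn : q ^+ n <= 1 by apply: exprn_ile1; have := q_ge34; have := q_le1; lra.
  have qn0 : 0 <= q ^+ n by apply: exprn_ge0; have := q_ge34; lra.
  have S1 : q ^+ n * (c0 + 1 / (2 * Hr) + Y) <= 1 * 1.
    apply: ler_pM => //; lra.
  have pb : p <= 1 / 4.
    rewrite /p ler_pdivrMr; last by have := Hr2_gt; lra.
    have := Hr2_gt. lra.
  have p0 := p_gt0.
  have : p * (q ^+ n * (c0 + 1 / (2 * Hr) + Y)) <= p * 1.
    apply: ler_wpM2l; lra.
  rewrite -mulrA. lra.
Qed.

Lemma part2 n (Hn : H = n.+1) (eps : R) : eps <= 1 / 15 ->
  (2 : R) ^ (H%:Z - 7%:Z) <= Cbar H eps.
Proof.
  move=> he.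
  have jlt : (n < H)%N by rewrite Hn.
  rewrite /Cbar.
  apply: le_trans (le_bigmax _ _ (Ordinal jlt)).
  have hP : eps <= \sum_(phi in [set a0]) dbar H (pie (R:=R)) n phi.
    rewrite big_set1 dbar_prod. have := prod_bound Hn. lra.
  apply: le_trans (le_bigmax_cond (j := [set a0]) _ _ hP).
  rewrite den_eq big_set1 dbar_prod.
  have pb := prod_bound Hn. have db := den_bound Hn.
  rewrite -[nat_of_ord (Ordinal jlt)]/n.
  set P := \prod_(k < n) rk k in pb *.
  set D := occ H (pib (R:=R) H) n s0 + occ H (pib H) n s1 in db *.
  have D0 : 0 < p * D.
    apply: mulr_gt0; first exact: p_gt0.
    have : 0 < occ H (pib (R:=R) H) n s0.
      rewrite d0_pib. apply: mulr_gt0.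
      - rewrite /c0. have := Hr2 => ?. apply: divr_gt0; lra.
      - apply: exprn_gt0. apply: divr_gt0 => //. have := q_ge34. lra.
    have := occ_ge0 pib_policy n s1. rewrite /D. lra.
  rewrite ler_pdivlMr //.
  have ez : (H%:Z - 7%:Z = n%:Z + Negz 5)%R by rewrite Hn NegzE; lia.
  have t0 : (2:R) != 0 by rewrite pnatr_eq0.
  rewrite ez (expfzDr _ _ t0) -exprnP.
  have c : (2:R) ^ (Negz 5) = 1 / 64.
    rewrite /exprz !exprS expr0. by field.
  rewrite c.
  have E : 2 ^+ n * (1 / 64) * (p * D) = (2 ^+ n * (p * D)) / 64 by field.
  rewrite E. clear ez hP c t0 E. lra.
Qed.
End Part.

Unset Implicit Arguments.

Theorem mainTheorem4 (R : realFieldType) (H : nat) (hH : (2 <= H)%N) :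
  (forall pi : nat -> 'I_3 -> 'I_2 -> R, policy pi ->
     forall h : nat, (h < H)%N -> forall (x : 'I_3) (a : 'I_2),
       occ H pi h x * pi h x a / (occ H (pib H) h x * pib H h x a)
         <= 8 * H%:R ^+ 3)
  /\
  (forall eps : R, eps <= 1 / 15 ->
     (2 : R) ^ (H%:Z - 7%:Z) <= Cbar H eps).
Proof.
  split.
  - move=> pi Hpi h hh x a. exact: (@part1 R H hH pi Hpi h hh x a).
  - move=> eps he. case: H hH he => [|n] hH he //.
    exact: (@part2 R n.+1 hH n (erefl _) eps he).
Qed.
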